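(* Let $r$ be a positive integer and let $G$ be a graph containing the $r$-grid $W_r$ as a minor, witnessed by branch sets $V_h\subseteq V(G)$, $h\in V(W_r)$. Let $\mathcal{T}'$ be the natural tangle of $W_r$ and let $\mathcal{T}$ be its extension to $G$. Then for every separation $(A,B)\in\mathcal{T}$ of order $s$, the set $A$ meets at most $s^2$ of the branch sets $V_h$.
   Context: For a positive integer $r$, the $r$-grid $W_r$ has vertex set $\{(i,j):1\le i,j\le r\}$, with $(i,j)$ adjacent to $(i',j')$ iff $|i-i'|+|j-j'|=1$. Its $j$th column is $\{1,\dots,r\}\times\{j\}$, its $i$th row is $\{i\}\times\{1,\dots,r\}$, and the union of a row and a column is a cross. A separation of a graph is a pair $(A,B)$ of vertex sets whose union is the whole vertex set such that no edge joins $A\setminus B$ to $B\setminus A$; its order is $|A\cap B|$. The natural tangle $\mathcal{T}'$ of $W_r$ is the set of all separations $(A',B')$ of $W_r$ of order less than $r$ such that $B'$ contains a cross. That $W_r$ is a minor of $G$ witnessed by branch sets $V_h$ means the $V_h$ ($h\in V(W_r)$) are pairwise disjoint vertex sets of $G$, each inducing a connected subgraph, and $G$ has an edge between $V_h$ and $V_{h'}$ whenever $hh'$ is an edge of $W_r$. For a separation $(A,B)$ of $G$, the induced separation of $W_r$ is $(A',B'):=(\{h: V_h\cap A\neq\emptyset\},\{h:V_h\cap B\ne\emptyset\})$. The extension $\mathcal{T}$ of $\mathcal{T}'$ to $G$ is the set of all separations $(A,B)$ of $G$ of order less than $r$ whose induced separation $(A',B')$ lies in $\mathcal{T}'$. 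*)

(* Defs.v *)
(* finite simple graphs as symmetric irreflexive relations. *)
From mathcomp Require Import all_boot.
Set Implicit Arguments. Unset Strict Implicit. Unset Printing Implicit Defensive.

Definition absdiff (m n : nat) : nat := (m - n) + (n - m).

Definition grid_vert (r : nat) : finType := ('I_r * 'I_r)%type.
Definition grid_adj (r : nat) : rel (grid_vert r) :=
  fun h h' => absdiff h.1 h'.1 + absdiff h.2 h'.2 == 1.

Definition separation (V : finType) (e : rel V) (A B : {set V}) : Prop :=
  A :|: B = setT /\
  forall x y, x \in A :\: B -> y \in B :\: A -> ~~ e x y.

Definition sep_order (V : finType) (A B : {set V}) : nat := #|A :&: B|.

Definition cross (r : nat) (i j : 'I_r) : {set grid_vert r} :=
  [set h : grid_vert r | (h.1 == i) || (h.2 == j)].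

Definition natural_tangle (r : nat) (A' B' : {set grid_vert r}) : Prop :=
  separation (@grid_adj r) A' B' /\ sep_order A' B' < r /\
  exists i j : 'I_r, cross i j \subset B'.

Definition connected_in (V : finType) (e : rel V) (S : {set V}) : bool :=
  (S != set0) &&
  [forall x in S, forall y in S,
     connect [rel u v | [&& u \in S, v \in S & e u v]] x y].

Definition grid_minor_model (r : nat) (V : finType) (e : rel V)
    (Vh : grid_vert r -> {set V}) : Prop :=
  (forall h h', h != h' -> [disjoint Vh h & Vh h']) /\
  (forall h, connected_in e (Vh h)) /\
  (forall h h', grid_adj h h' -> [exists x in Vh h, exists y in Vh h', e x y]).

Definition induced_set (r : nat) (V : finType) (Vh : grid_vert r -> {set V})
    (A : {set V}) : {set grid_vert r} :=
  [set h | Vh h :&: A != set0].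

Definition tangle_extension (r : nat) (V : finType) (e : rel V)
    (Vh : grid_vert r -> {set V}) (A B : {set V}) : Prop :=
  separation e A B /\ sep_order A B < r /\
  natural_tangle (induced_set Vh A) (induced_set Vh B).

(* Main.v *)
Require Import Defs.
From mathcomp Require Import all_boot zify.

Lemma grid_adj_sym r (u v : grid_vert r) : grid_adj u v = grid_adj v u.
Proof. by rewrite /grid_adj /absdiff (addnC (u.1 - v.1)) (addnC (u.2 - v.2)). Qed.

Lemma line_const r (A' B' : {set grid_vert r.+1}) (L : nat -> grid_vert r.+1) :
  separation (@grid_adj r.+1) A' B' ->
  (forall n, n < r -> grid_adj (L n) (L n.+1)) ->
  (forall n, n <= r -> L n \notin A' :&: B') ->
  forall n, n <= r -> (L n \in A') = (L 0 \in A').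
Proof.
move=> [ABT sep] Hadj Hns; elim=> [//|n IH] Hn.
rewrite -IH ?(ltnW Hn) //.
have Hu := Hns n (ltnW Hn); have Hv := Hns n.+1 Hn.
have Uu : L n \in A' :|: B' by rewrite ABT inE.
have Uv : L n.+1 \in A' :|: B' by rewrite ABT inE.
move: Hu Hv Uu Uv (sep (L n) (L n.+1)) (sep (L n.+1) (L n)).
rewrite !inE [grid_adj (L n.+1) _]grid_adj_sym Hadj //.
by case: (L n \in A'); case: (L n \in B'); case: (L n.+1 \in A'); case: (L n.+1 \in B') => //= _ _ _ _ H1 H2; first [by have := H1 isT isT | by have := H2 isT isT].
Qed.

Lemma row_sep r (A' B' : {set grid_vert r.+1}) (i j0 j1 : 'I_r.+1) :
  separation (@grid_adj r.+1) A' B' -> (i, j0) \in B' -> (i, j1) \in A' ->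
  exists j, (i, j) \in A' :&: B'.
Proof.
move=> sepG HB HA.
case: (boolP [exists j : 'I_r.+1, (i,j) \in A' :&: B']) => [/existsP //| /existsPn H].
pose L := fun n : nat => (i, inord n : 'I_r.+1).
have HL : forall j : 'I_r.+1, L j = (i, j) by move=> j; rewrite /L inord_val.
have Ha : forall n, n < r -> grid_adj (L n) (L n.+1).
  by move=> n Hn; rewrite /grid_adj /L /absdiff /= subnn !inordK //; apply/eqP; lia.
have Hn : forall n, n <= r -> L n \notin A' :&: B'.
  by move=> n Hn; rewrite /L; have := H (inord n).
have C := @line_const _ A' B' L sepG Ha Hn.
have Hj := ltn_ord j0; have Hj1 := ltn_ord j1.
have E0 := C j0 (Hj : (j0:nat) <= r); have E1 := C j1 (Hj1 : (j1:nat) <= r).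
rewrite !HL in E0 E1.
by have := H j0; rewrite inE HB andbT E0 -E1 HA.
Qed.

Lemma col_sep r (A' B' : {set grid_vert r.+1}) (j i0 i1 : 'I_r.+1) :
  separation (@grid_adj r.+1) A' B' -> (i0, j) \in B' -> (i1, j) \in A' ->
  exists i, (i, j) \in A' :&: B'.
Proof.
move=> sepG HB HA.
case: (boolP [exists i : 'I_r.+1, (i,j) \in A' :&: B']) => [/existsP //| /existsPn H].
pose L := fun n : nat => (inord n : 'I_r.+1, j).
have HL : forall i : 'I_r.+1, L i = (i, j) by move=> i; rewrite /L inord_val.
have Ha : forall n, n < r -> grid_adj (L n) (L n.+1).
  by move=> n Hn; rewrite /grid_adj /L /absdiff /= subnn !inordK //; apply/eqP; lia.
have Hn : forall n, n <= r -> L n \notin A' :&: B'.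
  by move=> n Hn; rewrite /L; have := H (inord n).
have C := @line_const _ A' B' L sepG Ha Hn.
have Hj := ltn_ord i0; have Hj1 := ltn_ord i1.
have E0 := C i0 (Hj : (i0:nat) <= r); have E1 := C i1 (Hj1 : (i1:nat) <= r).
rewrite !HL in E0 E1.
by have := H i0; rewrite inE HB andbT E0 -E1 HA.
Qed.

Lemma grid_bound r (A' B' : {set grid_vert r.+1}) (i0 j0 : 'I_r.+1) :
  separation (@grid_adj r.+1) A' B' -> cross i0 j0 \subset B' ->
  #|A'| <= #|A' :&: B'| ^ 2.
Proof.
move=> sepG /subsetP cr.
set S := A' :&: B'.
have sub : A' \subset setX [set h.1 | h in S] [set h.2 | h in S].
  apply/subsetP => [[i j]] Hij; rewrite inE /=; apply/andP; split.
  - have [j' Hj'] := @row_sep r A' B' i j0 j sepG (cr (i, j0) ltac:(by rewrite inE eqxx orbT)) Hij.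
    by apply/imsetP; exists (i, j').
  - have [i' Hi'] := @col_sep r A' B' j i0 i sepG (cr (i0, j) ltac:(by rewrite inE eqxx)) Hij.
    by apply/imsetP; exists (i', j).
apply: (leq_trans (subset_leq_card sub)).
by rewrite cardsX expnS expn1; apply: leq_mul; apply: leq_imset_card.
Qed.

Lemma conn_pres (T : finType) (R : rel T) (P : pred T) :
  (forall u v, R u v -> P u -> P v) -> forall x y, connect R x y -> P x -> P y.
Proof.
move=> HR x y /connectP [p pth ->]; elim: p x pth => [|z p IH] x //= /andP [Rxz pth] Px.
exact: IH pth (HR _ _ Rxz Px).
Qed.

Lemma meet_both (V : finType) (e : rel V) (S A B : {set V}) :
  symmetric e -> separation e A B -> connected_in e S ->
  S :&: A != set0 -> S :&: B != set0 -> S :&: (A :&: B) != set0.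
Proof.
move=> esym [ABT sep] /andP [_ /forall_inP Hc] /set0Pn [x] /setIP [xS xA]
  /set0Pn [y] /setIP [yS yB].
apply/negP => /eqP E.
have nAB : forall z, z \in S -> z \in A -> z \in B -> False.
  move=> z zS zA zB; have : z \in S :&: (A :&: B) by rewrite !inE zS zA zB.
  by rewrite E inE.
have cxy : connect [rel u v | [&& u \in S, v \in S & e u v]] x y.
  by move: (Hc x xS) => /forall_inP; apply.
have Hcl : forall u v, [rel u v | [&& u \in S, v \in S & e u v]] u v ->
    [pred z | z \in A :\: B] u -> [pred z | z \in A :\: B] v.
  move=> u v /= /and3P [uS vS euv]; rewrite !inE => /andP [uB uA].
  have : v \in A :|: B by rewrite ABT inE.
  rewrite inE; case/orP => [vA|vB].
    by rewrite vA andbT; apply/negP => vB; apply: (nAB v).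
  have vA : v \notin A by apply/negP => vA; apply: (nAB v).
  have := sep u v; rewrite !inE uA uB vA vB euv; by move=> /(_ isT isT).
have := @conn_pres _ _ _ Hcl _ _ cxy; rewrite /= !inE xA yB /= andbT => H.
have : false by apply: H; apply/negP => xB; apply: (nAB x).
by [].
Qed.

Lemma some_inj (V : finType) : injective (@Some V).
Proof. by move=> a b []. Qed.

Lemma sep_count (r : nat) (V : finType) (e : rel V)
    (Vh : grid_vert r -> {set V}) (A B : {set V}) :
  symmetric e -> grid_minor_model e Vh -> separation e A B ->
  #|induced_set Vh A :&: induced_set Vh B| <= #|A :&: B|.
Proof.
move=> esym [disj [conn _]] sepAB.
set S' := induced_set Vh A :&: induced_set Vh B.
pose g h := [pick x in Vh h :&: (A :&: B)].
have Hg : forall h, h \in S' -> exists2 x, g h = Some x & x \in Vh h :&: (A :&: B).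
  move=> h; rewrite !inE => /andP [hA hB].
  have := @meet_both _ _ _ _ _ esym sepAB (conn h) hA hB.
  rewrite /g; case: pickP => [x Hx _|H]; first by exists x.
  by move/set0Pn => [x Hx]; have := H x; rewrite Hx.
have inj : {in S' &, injective g}.
  move=> h1 h2 H1 H2 Eg; have [x E1 X1] := Hg _ H1; have [y E2 Y2] := Hg _ H2.
  apply/eqP; apply/negP => /negP ne.
  move: X1 Y2; rewrite Eg E2 in E1; case: E1 => ->.
  by rewrite !inE => /andP [X1 _] /andP [Y2 _]; rewrite (disjointFl (disj _ _ ne) Y2) in X1.
rewrite -(card_in_imset inj) -(card_imset (A :&: B) (@some_inj V)).
apply: subset_leq_card; apply/subsetP => o /imsetP [h hS ->].
have [x -> X] := Hg _ hS; apply/imsetP; exists x => //.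
by move: X; rewrite inE => /andP [].
Qed.

Theorem corollary5 (r : nat) (V : finType) (e : rel V)
    (Vh : grid_vert r -> {set V}) :
  0 < r -> symmetric e -> irreflexive e ->
  grid_minor_model e Vh ->
  forall A B : {set V}, tangle_extension e Vh A B ->
    #|[set h : grid_vert r | Vh h :&: A != set0]| <= (sep_order A B) ^ 2.
Proof.
case: r Vh => [//|r] Vh _ esym _ model A B [sepAB [_ [sepG [_ [i0 [j0 cr]]]]]].
change (#|induced_set Vh A| <= (sep_order A B) ^ 2).
apply: leq_trans (@grid_bound r _ _ i0 j0 sepG cr) _.
have := @sep_count _ _ _ Vh A B esym model sepAB.
rewrite /sep_order => H.
by rewrite !expnS !expn0 !muln1 leq_mul.
Qed.
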